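(* Let $f\in C^1([0,1],\mathbb{R})$ satisfy $f(0)=f(1)=0$, $f(s)>0$ for all $s\in(0,1)$, $f'(1)<0$, and suppose there exist $s_0\in(0,1)$, $K\ge 0$, $\alpha>0$ and $r>0$ such that $$f(s)\le r\frac{s}{(1+|\ln s|)^\alpha}\ \text{ for all } s\in(0,1),\qquad f(s)\ge r\frac{s}{(1+|\ln s|)^\alpha}(1-Ks)\ \text{ for all } s\in(0,s_0].$$ Let $\mu>0$, $p:=\frac{1}{\alpha+1}$, and for $M>e$ define $z_0:=\big(\frac{\ln M}{\mu}\big)^{1/p}$ and $w(z):=Me^{-\mu z^p}$ for $z\ge z_0$ (so $0<w\le1$). Then for any $M>e$ there is $c>0$ such that $$w''(z)+cw'(z)+f(w(z))\le 0\quad\text{for all } z\ge z_0.$$ *)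

(* Defs.v *)
From Stdlib Require Import Reals.
From Coquelicot Require Import Coquelicot.
Open Scope R_scope.

Definition I01 (x : R) : Prop := 0 <= x <= 1.

Definition has_deriv_01 (f : R -> R) (x l : R) : Prop :=
  filterlim (fun y => (f y - f x) / (y - x))
    (within (fun y => I01 y /\ y <> x) (locally x)) (locally l).

Definition C1_01 (f df : R -> R) : Prop :=
  (forall x, I01 x -> has_deriv_01 f x (df x)) /\
  (forall x, I01 x -> filterlim df (within I01 (locally x)) (locally (df x))).

Definition wfun (M mu p : R) (z : R) : R := M * exp (- mu * Rpower z p).

(* Main.v *)
From Stdlib Require Import Reals Lra.
From Coquelicot Require Import Coquelicot.
Require Import Defs.
Open Scope R_scope.

Lemma w_derivs (M mu p z : R) : 0 < z ->
  Derive (wfun M mu p) z =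
    - mu * p * exp (p * ln z) / z * (M * exp (- mu * exp (p * ln z))) /\
  Derive (Derive (wfun M mu p)) z =
    mu * p * exp (p * ln z) * (M * exp (- mu * exp (p * ln z))) / (z * z)
      * (1 - p + mu * p * exp (p * ln z)).
Proof.
  intros Hz.
  set (g1 := fun y => - mu * p * exp (p * ln y) / y * (M * exp (- mu * exp (p * ln y)))).
  assert (H1 : forall y, 0 < y -> is_derive (wfun M mu p) y (g1 y)).
  { intros y Hy. unfold wfun, Rpower, g1. auto_derive. lra. field. lra. }
  split.
  - apply is_derive_unique, H1, Hz.
  - rewrite (Derive_ext_loc _ g1).
    + apply is_derive_unique. unfold g1. auto_derive. repeat split; lra. field. lra.
    + apply (locally_interval _ z 0 p_infty). simpl; lra. simpl; auto.
      intros y Hy _. simpl in Hy. apply is_derive_unique, H1, Hy.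
Qed.

Theorem lemma2p1 (f df : R -> R) (s0 K alpha r mu : R) :
  C1_01 f df ->
  f 0 = 0 -> f 1 = 0 ->
  (forall s, 0 < s < 1 -> f s > 0) ->
  df 1 < 0 ->
  0 < s0 < 1 -> 0 <= K -> 0 < alpha -> 0 < r ->
  (forall s, 0 < s < 1 -> f s <= r * (s / Rpower (1 + Rabs (ln s)) alpha)) ->
  (forall s, 0 < s <= s0 ->
     f s >= r * (s / Rpower (1 + Rabs (ln s)) alpha) * (1 - K * s)) ->
  0 < mu ->
  forall M : R, M > exp 1 ->
  exists c : R, c > 0 /\
    forall z : R, z >= Rpower (ln M / mu) (/ (/ (alpha + 1))) ->
      Derive (Derive (wfun M mu (/ (alpha + 1)))) z
      + c * Derive (wfun M mu (/ (alpha + 1))) z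
      + f (wfun M mu (/ (alpha + 1)) z) <= 0.
Proof.
  intros _ _ f1 _ _ _ _ Ha Hr Hup _ Hmu M HM.
  set (p := / (alpha + 1)).
  assert (Hp : 0 < p) by (unfold p; apply Rinv_0_lt_compat; lra).
  assert (Hp1 : p <= 1).
  { unfold p. rewrite <- Rinv_1. apply Rinv_le_contravar; lra. }
  assert (Hpa : p * (alpha + 1) = 1) by (unfold p; field; lra).
  assert (HM0 : 0 < M) by (pose proof (exp_pos 1); lra).
  set (L := ln M).
  assert (HL : 1 < L).
  { unfold L. rewrite <- (ln_exp 1). apply ln_increasing; [apply exp_pos | lra]. }
  set (U0 := L / mu).
  assert (HU0 : 0 < U0) by (unfold U0; apply Rdiv_lt_0_compat; lra).
  set (z0 := Rpower U0 (alpha + 1)).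
  assert (Hz0 : 0 < z0) by (unfold z0, Rpower; apply exp_pos).
  set (B := Rpower U0 alpha).
  assert (HB : 0 < B) by (unfold B, Rpower; apply exp_pos).
  exists ((1 - p) / z0 + mu * p / B + r * B / (mu * p) + 1).
  assert (Hc1 : 0 <= (1 - p) / z0) by (apply Rdiv_le_0_compat; lra).
  assert (Hc2 : 0 < mu * p / B) by (apply Rdiv_lt_0_compat; nra).
  assert (Hc3 : 0 < r * B / (mu * p)) by (apply Rdiv_lt_0_compat; nra).
  split; [lra|].
  intros z Hz. fold p in Hz. unfold p in Hz at 1. rewrite Rinv_inv in Hz.
  fold U0 z0 in Hz. fold p.
  assert (Hzp : 0 < z) by lra.
  destruct (w_derivs M mu p z Hzp) as [D1 D2]. rewrite D1, D2. clear D1 D2.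
  set (U := exp (p * ln z)).
  assert (HU : 0 < U) by (unfold U; apply exp_pos).
  assert (HUz : Rpower U (alpha + 1) = z).
  { change U with (Rpower z p). rewrite Rpower_mult, Hpa. apply Rpower_1; lra. }
  assert (HUU0 : U0 <= U).
  { change U with (Rpower z p).
    replace U0 with (Rpower z0 p).
    - apply Rle_Rpower_l; lra.
    - unfold z0. rewrite Rpower_mult, Rmult_comm, Hpa. apply Rpower_1; lra. }
  set (Q := Rpower U alpha).
  assert (HQ : 0 < Q) by (unfold Q, Rpower; apply exp_pos).
  assert (HzQ : z = U * Q).
  { rewrite <- HUz. unfold Q. rewrite Rplus_comm, Rpower_plus, Rpower_1; lra. }
  assert (HQB : B <= Q) by (apply Rle_Rpower_l; lra).
  set (W := M * exp (- mu * U)).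
  assert (HW : 0 < W) by (unfold W; pose proof (exp_pos (- mu * U)); nra).
  assert (HlnW : ln W = L - mu * U).
  { unfold W, L. rewrite ln_mult, ln_exp; [ring | lra | apply exp_pos]. }
  assert (HmuU : L <= mu * U).
  { unfold U0 in HUU0. apply (Rmult_le_compat_l mu) in HUU0; [|lra].
    replace (mu * (L / mu)) with L in HUU0 by (field; lra). lra. }
  assert (HW1 : W <= 1).
  { rewrite <- (exp_ln W HW), HlnW, <- exp_0.
    destruct (Req_dec (L - mu * U) 0) as [e|e]; [rewrite e; lra|].
    left. apply exp_increasing. lra. }
  assert (Hf : f W <= r * B * (W / Q)).
  { destruct (Req_dec W 1) as [e|e].
    - rewrite e, f1. apply Rmult_le_pos; [nra|]. apply Rdiv_le_0_compat; lra.
    - eapply Rle_trans; [apply Hup; lra|].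
      rewrite HlnW, Rabs_left1 by lra.
      assert (Hq : Q <= Rpower (1 + - (L - mu * U)) alpha * B).
      { unfold B, Q. rewrite Rpower_mult_distr; [|lra|lra].
        apply Rle_Rpower_l; [lra|]. split; [lra|].
        unfold U0.
        apply (Rmult_le_reg_l mu); [lra|].
        replace (mu * ((1 + - (L - mu * U)) * (L / mu))) with ((1 + - (L - mu * U)) * L)
          by (field; lra).
        nra. }
      assert (Hpos : 0 < Rpower (1 + - (L - mu * U)) alpha) by (unfold Rpower; apply exp_pos).
      set (P := Rpower (1 + - (L - mu * U)) alpha) in *.
      assert (HPQ : / P <= B / Q).
      { replace (B / Q) with (/ (Q / B)) by (field; lra).
        apply Rinv_le_contravar. apply Rdiv_lt_0_compat; lra.
        apply (Rmult_le_reg_r B); [lra|].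
        replace (Q / B * B) with Q by (field; lra). lra. }
      replace (r * (W / P)) with ((r * W) * / P) by (unfold Rdiv; ring).
      replace (r * B * (W / Q)) with ((r * W) * (B / Q)) by (unfold Rdiv; ring).
      apply Rmult_le_compat_l; nra. }
  fold W.
  replace (wfun M mu p z) with W by reflexivity.
  assert (H1 : (1 - p) / z <= (1 - p) / z0).
  { unfold Rdiv. apply Rmult_le_compat_l; [lra|]. apply Rinv_le_contravar; lra. }
  assert (H2 : / Q <= / B) by (apply Rinv_le_contravar; lra).
  set (c := (1 - p) / z0 + mu * p / B + r * B / (mu * p) + 1).
  assert (Hcm : c * (mu * p) = mu * p * ((1 - p) / z0) + mu * p * (mu * p) * / B + r * B + mu * p).
  { unfold c. field. split; lra. }
  replace (mu * p * U * W / (z * z) * (1 - p + mu * p * U) + c * (- mu * p * U / z * W))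
    with ((W / Q) * (mu * p * ((1 - p) / z) + mu * p * (mu * p) * / Q - c * (mu * p)))
    by (rewrite HzQ; field; split; lra).
  assert (Hbr : mu * p * ((1 - p) / z) + mu * p * (mu * p) * / Q - c * (mu * p) <= - (r * B)).
  { rewrite Hcm.
    assert (mu * p * ((1 - p) / z) <= mu * p * ((1 - p) / z0)) by (apply Rmult_le_compat_l; nra).
    assert (mu * p * (mu * p) * / Q <= mu * p * (mu * p) * / B) by (apply Rmult_le_compat_l; nra).
    nra. }
  assert (HWQ : 0 < W / Q) by (apply Rdiv_lt_0_compat; lra).
  assert (W / Q * (mu * p * ((1 - p) / z) + mu * p * (mu * p) * / Q - c * (mu * p)) <= W / Q * - (r * B))
    by (apply Rmult_le_compat_l; lra).
  nra.
Qed.
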